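(* Let $G=(V,(c_{xy})_{x,y\in V})$ be a connected weighted finite graph and $\alpha=(\alpha_x)_{x\in V}$ positive site-weights. Then $$(1\wedge \alpha_{\min})\,\mathrm{gap}_{\rm RW}(G,\alpha)\le \mathrm{gap}_{\rm SIP}(G,\alpha)\le \mathrm{gap}_{\rm RW}(G,\alpha),$$ where $\alpha_{\min}:=\min_{x\in V}\alpha_x$.
   Context: $G=(V,(c_{xy}))$ is a finite graph with $|V|=n$ and symmetric non-negative edge weights $c_{xy}=c_{yx}\ge 0$, connected (the graph of pairs with $c_{xy}>0$ is connected). For $k\in\mathbb N$, $\Xi_k:=\{\eta\in\mathbb N_0^V:\sum_x\eta_x=k\}$. For $\eta$ with $\eta_x\ge1$, $\eta-\delta_x+\delta_y$ is the configuration obtained by moving one particle from $x$ to $y$. The symmetric inclusion process ${\rm SIP}_k(G,\alpha)$ is the continuous-time Markov chain on $\Xi_k$ with generator $L_kf(\eta)=\sum_{x\in V}\eta_x\sum_{y\in V}c_{xy}(\alpha_y+\eta_y)(f(\eta-\delta_x+\delta_y)-f(\eta))$. It is reversible with respect to $\mu_{\alpha,k}(\eta)=Z_{\alpha,k}^{-1}\prod_{x}\frac{\Gamma(\alpha_x+\eta_x)}{\Gamma(\alpha_x)\eta_x!}$ (normalized), and $\mathrm{gap}_k(G,\alpha)$ denotes the second smallest eigenvalue of $-L_k$ (smallest nonzero one). The random walk ${\rm RW}(G,\alpha)$ is the Markov chain on $V$ with generator $A_\alpha f(x)=\sum_{y}c_{xy}\alpha_y(f(y)-f(x))$; note $\mathrm{gap}_1(G,\alpha)$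 equals its spectral gap. Define $\mathrm{gap}_{\rm RW}(G,\alpha):=\mathrm{gap}_1(G,\alpha)$ and $\mathrm{gap}_{\rm SIP}(G,\alpha):=\inf_{k\ge2}\mathrm{gap}_k(G,\alpha)$. *)

(* Defs.v *)
From HB Require Import structures.
From mathcomp Require Import all_boot all_order all_algebra.
From mathcomp Require Import boolp classical_sets reals.
Set Implicit Arguments. Unset Strict Implicit. Unset Printing Implicit Defensive.
Import Order.TTheory GRing.Theory Num.Theory.
Local Open Scope ring_scope.
Local Open Scope classical_set_scope.

Section SIP.
Variables (R : realType) (V : finType).

Definition conf := {ffun V -> nat}.

Definition inXi (k : nat) (eta : conf) : bool := (\sum_(x : V) eta x == k)%N.

(* eta - delta_x + delta_y (only used when eta x >= 1) *)
Definition move (eta : conf) (x y : V) : conf :=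
  [ffun z => (eta z - (z == x) + (z == y))%N].

Definition Lgen (c : V -> V -> R) (alpha : V -> R) (f : conf -> R) (eta : conf) : R :=
  \sum_(x : V) (eta x)%:R *
    \sum_(y : V) c x y * (alpha y + (eta y)%:R) * (f (move eta x y) - f eta).

Definition eigen_negL (c : V -> V -> R) (alpha : V -> R) (k : nat) (lam : R) : Prop :=
  exists f : conf -> R,
    (exists eta, inXi k eta /\ f eta != 0) /\
    (forall eta, inXi k eta -> - Lgen c alpha f eta = lam * f eta).

Definition gap (c : V -> V -> R) (alpha : V -> R) (k : nat) : R :=
  inf [set lam : R | lam != 0 /\ eigen_negL c alpha k lam].

Definition gapRW c alpha := gap c alpha 1.

Definition gapSIP c alpha : R := inf [set gap c alpha k | k in [set k : nat | (2 <= k)%N]].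

Definition alpha_min (alpha : V -> R) : R := inf (range alpha).

End SIP.

(* Main.v *)
Require Import Defs.
From HB Require Import structures.
From mathcomp Require Import all_boot all_order all_algebra.
From mathcomp Require Import boolp classical_sets reals topology normedtype derive.
From mathcomp Require Import zify ring lra.
Import Order.TTheory GRing.Theory Num.Theory.
Import numFieldNormedType.Exports.
Set Implicit Arguments. Unset Strict Implicit. Unset Printing Implicit Defensive.
Local Open Scope ring_scope.
Section PartA.
Variables (R : realType) (V : finType).
Implicit Types (eta xi : conf V) (h : V -> R).

Definition add (xi : conf V) (u : V) : conf V := [ffun z => (xi z + (z == u))%N].

Lemma move_add xi x y : move (add xi x) x y = add xi y.
Proof. by apply/ffunP => z; rewrite !ffunE addnK. Qed.

Lemma move_add2 xi x u v : (0 < xi u)%N -> move (add xi x) u v = add (move xi u v) x.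
Proof.
move=> hu; apply/ffunP => z; rewrite !ffunE.
case: (eqVneq z u) => [->|_]; last first.
  by move: (z == x) (z == v) => [] []; lia.
by move: (u == x) (u == v) hu => [] []; lia.
Qed.

Lemma add_move xi u v : (0 < xi u)%N -> add (move xi u v) u = add xi v.
Proof.
move=> hu; apply/ffunP => z; rewrite !ffunE.
case: (eqVneq z u) => [->|_]; last first.
  by move: (z == v) => []; lia.
by move: (u == v) hu => []; lia.
Qed.

Lemma move_same eta x : (0 < eta x)%N -> move eta x x = eta.
Proof.
move=> hx; apply/ffunP => z; rewrite !ffunE.
case: (eqVneq z x) => [->|_] /=; lia.
Qed.

Lemma sum_delta (F : V -> R) x : \sum_z (z == x)%:R * F z = F x.
Proof.
rewrite (bigD1 x) //= eqxx mul1r big1 ?addr0 // => z /negbTE ->.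
by rewrite mul0r.
Qed.

Lemma green (K : V -> V -> R) (u : V -> R) h : (forall x y, K x y = K y x) ->
  \sum_x \sum_y K x y * u x * (h y - h x) =
  - (\sum_x \sum_y K x y * (u y - u x) * (h y - h x)) / 2.
Proof.
move=> Ks.
set S1 := \sum_x \sum_y K x y * u x * (h y - h x).
have E : \sum_x \sum_y K x y * u y * (h y - h x) = - S1.
  rewrite exchange_big /S1 -sumrN; apply: eq_bigr => x _.
  rewrite -sumrN; apply: eq_bigr => y _; rewrite Ks; ring.
have E2 : \sum_x \sum_y K x y * (u y - u x) * (h y - h x) =
    \sum_x \sum_y K x y * u y * (h y - h x) - S1.
  rewrite /S1 -sumrB; apply: eq_bigr => x _.
  rewrite -sumrB; apply: eq_bigr => y _; ring.
by rewrite E2 E; field.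
Qed.

Lemma antisym (K : V -> V -> R) h : (forall x y, K x y = K y x) ->
  \sum_x \sum_y K x y * (h y - h x) = 0.
Proof.
move=> Ks; have := green (fun _ => 1%R : R) h Ks.
under eq_bigr => x _ do under eq_bigr => y _ do rewrite mulr1.
move=> ->; rewrite big1 ?oppr0 ?mul0r // => x _.
by rewrite big1 // => y _; rewrite subrr mulr0 mul0r.
Qed.

Definition liftf h (eta : conf V) : R := \sum_x (eta x)%:R * h x.

Lemma liftf_move h eta x y : (0 < eta x)%N ->
  liftf h (move eta x y) = liftf h eta - h x + h y.
Proof.
move=> hx; rewrite /liftf.
have E : forall z, ((move eta x y) z)%:R * h z =
    (eta z)%:R * h z - (z == x)%:R * h z + (z == y)%:R * h z.
  move=> z; rewrite ffunE.
  have -> : ((eta z - (z == x) + (z == y))%N%:R : R) =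
      (eta z)%:R - (z == x)%:R + (z == y)%:R.
    case: (eqVneq z x) => [->|_] /=; last by rewrite subn0 natrD subr0.
    by rewrite natrD natrB.
  ring.
under eq_bigr => z _ do rewrite E.
by rewrite big_split /= sumrB !sum_delta.
Qed.

End PartA.
Section PartB.
Variables (R : realType) (V : finType) (c : V -> V -> R) (alpha : V -> R).
Hypothesis c_sym : forall x y, c x y = c y x.
Implicit Types (eta xi : conf V) (h : V -> R).

Definition Aop h x := \sum_y c x y * alpha y * (h y - h x).

Lemma sum_eta_eq eta (A B : V -> R) : (forall x, (0 < eta x)%N -> A x = B x) ->
  \sum_x (eta x)%:R * A x = \sum_x (eta x)%:R * B x.
Proof.
by move=> H; apply: eq_bigr => x _; case: (posnP (eta x)) => [->|/H->]; rewrite ?mul0r.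
Qed.

Lemma Lgen_lift h eta : Lgen c alpha (liftf h) eta = \sum_x (eta x)%:R * Aop h x.
Proof.
rewrite /Lgen (sum_eta_eq (B := fun x =>
   \sum_y c x y * (alpha y + (eta y)%:R) * (h y - h x))); last first.
  move=> x hx; apply: eq_bigr => y _; rewrite liftf_move //; congr (_ * _); ring.
have E : forall x, (eta x)%:R * \sum_y c x y * (alpha y + (eta y)%:R) * (h y - h x)
   = (eta x)%:R * Aop h x + \sum_y ((eta x)%:R * (eta y)%:R * c x y) * (h y - h x).
  move=> x; rewrite /Aop !mulr_sumr -big_split; apply: eq_bigr => y _ /=; ring.
under eq_bigr => x _ do rewrite E.
rewrite big_split /= antisym ?addr0 // => x y; rewrite c_sym; ring.
Qed.

Definition kdelta (k : nat) (x : V) : conf V := [ffun z => (k * (z == x))%N].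

Lemma lift_eigen k lam h : (0 < k)%N -> (forall x, - Aop h x = lam * h x) ->
  (exists x, h x != 0) -> eigen_negL c alpha k lam.
Proof.
move=> k0 H [x0 hx0]; exists (liftf h); split.
  exists (kdelta k x0); split.
    rewrite /inXi (bigD1 x0) //= ffunE eqxx muln1 big1 ?addn0 // => z /negbTE zx.
    by rewrite ffunE zx muln0.
  rewrite /liftf (bigD1 x0) //= ffunE eqxx muln1 big1 ?addr0.
    by rewrite mulf_neq0 // pnatr_eq0 -lt0n.
  by move=> z /negbTE zx; rewrite ffunE zx muln0 mul0r.
move=> eta _; rewrite Lgen_lift -sumrN /liftf mulr_sumr; apply: eq_bigr => x _.
by rewrite -mulrN H; ring.
Qed.

Local Notation T N := {ffun V -> 'I_N.+1}.
Definition toc N (e : T N) : conf V := [ffun x => nat_of_ord (e x)].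
Definition SumX N k (F : conf V -> R) := \sum_(e : T N | inXi k (toc e)) F (toc e).

Lemma inXi_le k eta x : inXi k eta -> (eta x <= k)%N.
Proof. by move/eqP <-; rewrite (bigD1 x) //= leq_addr. Qed.

Lemma sum_add xi u : (\sum_z add xi u z = (\sum_z xi z).+1)%N.
Proof.
rewrite (eq_bigr (fun z => xi z + (z == u))%N) => [|z _]; last by rewrite ffunE.
rewrite big_split /=.
have -> : (\sum_z (z == u) = 1)%N.
  by rewrite (bigD1 u) //= eqxx big1 // => z /negbTE ->.
by rewrite addn1.
Qed.

Lemma inXi_add k xi u : inXi k.+1 (add xi u) = inXi k xi.
Proof. by rewrite /inXi sum_add eqSS. Qed.

Lemma R1 N k (G : conf V -> V -> R) : (k < N)%N ->
  SumX N k.+1 (fun eta => \sum_u (eta u)%:R * G eta u) =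
  SumX N k (fun xi => \sum_u (xi u).+1%:R * G (add xi u) u).
Proof.
move=> kN; rewrite /SumX exchange_big [RHS]exchange_big; apply: eq_bigr => u _.
rewrite (bigID (fun e : T N => (0 < e u)%N)) /= [X in _ + X]big1 ?addr0; last first.
  move=> e /andP[_]; rewrite -eqn0Ngt => /eqP eu.
  by rewrite /toc ffunE eu mul0r.
pose hf (e : T N) : T N := [ffun z => inord (e z + (z == u))].
pose hb (e : T N) : T N := [ffun z => inord (e z - (z == u))].
rewrite (reindex_onto hf hb); last first.
  move=> e /andP[_ hu]; apply/ffunP => z; apply: val_inj; rewrite !ffunE /=.
  have ez := ltn_ord (e z).
  have h1 : (e z - (z == u) < N.+1)%N by lia.
  by rewrite (inordK h1) inordK; case: (eqVneq z u) => [->|_] /=; rewrite ?subnK ?subn0 ?addn0.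
have key : forall e : T N, (e u < N)%N -> toc (hf e) = add (toc e) u /\ hb (hf e) = e.
  move=> e heu.
  have h1 : forall z, (e z + (z == u) < N.+1)%N.
    move=> z; case: (eqVneq z u) => [->|_] /=; first by rewrite addn1 ltnS.
    by rewrite addn0.
  split.
    by apply/ffunP => z; rewrite !ffunE inordK.
  apply/ffunP => z; apply: val_inj; rewrite !ffunE /= (inordK (h1 z)) addnK.
  by rewrite inordK.
have Peq : forall e : T N, inXi k.+1 (toc (hf e)) && (0 < hf e u)%N && (hb (hf e) == e)
    = inXi k (toc e).
  move=> e; case: (ltnP (e u) N) => heu.
    have [-> ->] := key e heu; rewrite eqxx andbT inXi_add.
    rewrite ffunE eqxx inordK; first by rewrite addn1 andbT.
    by rewrite addn1 ltnS.
  have -> : (0 < hf e u)%N = false.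
    rewrite ffunE eqxx /inord /insubd insubN //=.
    by rewrite -leqNgt addn1 ltnS.
  rewrite andbF /=; apply/esym/negbTE; apply/negP => /(inXi_le u).
  by rewrite /toc ffunE => hle; have := leq_ltn_trans hle kN; rewrite ltnNge heu.
apply: eq_big => [e|e]; first exact: Peq.
rewrite Peq => hk; have heu : (e u < N)%N.
  by have := inXi_le u hk; rewrite /toc ffunE => hle; exact: leq_ltn_trans hle kN.
have [-> _] := key e heu.
by rewrite /add ffunE eqxx addn1.
Qed.

End PartB.
Section PartC.
Variables (R : realType) (V : finType) (c : V -> V -> R) (alpha : V -> R).
Hypothesis c_sym : forall x y, c x y = c y x.
Hypothesis alpha_gt0 : forall x, 0 < alpha x.
Implicit Types (eta xi : conf V) (h : V -> R).

Definition pw (a : R) (n : nat) : R := \prod_(i < n) ((a + i%:R) / (i.+1)%:R).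
Definition wt xi : R := \prod_x pw (alpha x) (xi x).

Lemma pw_gt0 a n : 0 < a -> 0 < pw a n.
Proof.
move=> a0; apply: prodr_gt0 => i _; apply: divr_gt0; last by rewrite ltr0Sn.
by have := ler0n R i; lra.
Qed.

Lemma wt_gt0 xi : 0 < wt xi.
Proof. by apply: prodr_gt0 => x _; apply: pw_gt0. Qed.

Lemma pwS a n : pw a n.+1 = pw a n * ((a + n%:R) / n.+1%:R).
Proof. by rewrite /pw big_ord_recr. Qed.

Definition beta xi x := alpha x + (xi x)%:R.

Lemma wt_add xi u : wt (add xi u) * (xi u).+1%:R = wt xi * beta xi u.
Proof.
rewrite /wt (bigD1 u) //= [in RHS](bigD1 u) //= ffunE eqxx addn1 pwS.
rewrite (eq_bigr (fun x => pw (alpha x) (xi x))); last first.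
  by move=> z /negbTE zu; rewrite ffunE zu addn0.
rewrite /beta; field.
by rewrite addrC natr1 pnatr_eq0.
Qed.

Definition aop (f : conf V -> R) xi := \sum_x beta xi x * f (add xi x).

Lemma beta_move xi u v x : (0 < xi u)%N ->
  beta (move xi u v) x = beta xi x - (x == u)%:R + (x == v)%:R.
Proof.
move=> hu; rewrite /beta ffunE.
case: (eqVneq x u) => [->|_] /=; last by rewrite subn0 natrD subr0 addrA.
by rewrite natrD natrB // addrA addrA.
Qed.

Lemma IT_uv (f : conf V -> R) xi u v : (0 < xi u)%N ->
  \sum_x beta xi x * (c u v * (beta xi v + (v == x)%:R) *
      (f (add (move xi u v) x) - f (add xi x)))
  = c u v * beta xi v * (aop f (move xi u v) - aop f xi).
Proof.
move=> hu; set xi' := move xi u v.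
have E1 : aop f xi' = \sum_x beta xi x * f (add xi' x) - f (add xi' u) + f (add xi' v).
  rewrite /aop.
  under eq_bigr => x _ do rewrite beta_move //.
  have E : forall x, (beta xi x - (x == u)%:R + (x == v)%:R) * f (add xi' x) =
     beta xi x * f (add xi' x) - (x == u)%:R * f (add xi' x) + (x == v)%:R * f (add xi' x).
    by move=> x; ring.
  under eq_bigr => x _ do rewrite E.
  by rewrite big_split /= sumrB !sum_delta.
transitivity (\sum_x (c u v * beta xi v * (beta xi x * f (add xi' x) - beta xi x * f (add xi x))
   + (x == v)%:R * (c u v * beta xi x * (f (add xi' x) - f (add xi x))))).
  apply: eq_bigr => x _; rewrite (eq_sym v x).
  by case: (eqVneq x v) => [->|_] /=; ring.
rewrite big_split /= sum_delta -mulr_sumr sumrB E1 /xi' add_move //.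
rewrite /aop; ring.
Qed.

Lemma Lgen_add_split (f : conf V -> R) xi x :
  Lgen c alpha f (add xi x) =
  \sum_u (xi u)%:R * \sum_v c u v * (beta xi v + (v == x)%:R) *
      (f (add (move xi u v) x) - f (add xi x))
  + \sum_v c x v * (beta xi v + (v == x)%:R) * (f (add xi v) - f (add xi x)).
Proof.
rewrite /Lgen.
have E : forall u, ((add xi x) u)%:R * \sum_v c u v * (alpha v + ((add xi x) v)%:R) *
   (f (move (add xi x) u v) - f (add xi x)) =
   (xi u)%:R * \sum_v c u v * (beta xi v + (v == x)%:R) * (f (move (add xi x) u v) - f (add xi x))
   + (u == x)%:R * \sum_v c u v * (beta xi v + (v == x)%:R) * (f (move (add xi x) u v) - f (add xi x)).
  move=> u; rewrite -mulrDl ffunE natrD; congr (_ * _); apply: eq_bigr => v _.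
  by rewrite ffunE natrD /beta addrA.
under eq_bigr => u _ do rewrite E.
rewrite big_split /= sum_delta; congr (_ + _).
  apply: sum_eta_eq => u hu; apply: eq_bigr => v _; by rewrite move_add2.
by apply: eq_bigr => v _; rewrite move_add.
Qed.

Lemma intertwine (f : conf V -> R) xi :
  \sum_x beta xi x * Lgen c alpha f (add xi x) = Lgen c alpha (aop f) xi.
Proof.
under eq_bigr => x _ do rewrite Lgen_add_split mulrDr.
rewrite big_split /=.
have -> : \sum_x beta xi x * \sum_v c x v * (beta xi v + (v == x)%:R) *
     (f (add xi v) - f (add xi x)) = 0.
  transitivity (\sum_x \sum_v (beta xi x * beta xi v * c x v) * (f (add xi v) - f (add xi x))
     + \sum_x \sum_v (beta xi x * c x v * (v == x)%:R * (f (add xi v) - f (add xi x)))).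
    rewrite -big_split; apply: eq_bigr => x _ /=; rewrite mulr_sumr -big_split.
    by apply: eq_bigr => v _ /=; ring.
  rewrite antisym; last by move=> x y; rewrite c_sym; ring.
  rewrite add0r big1 // => x _; rewrite big1 // => v _.
  by case: (eqVneq v x) => [->|_]; rewrite ?subrr ?mulr0 ?mul0r ?mulr0.
rewrite addr0 /Lgen.
transitivity (\sum_u (xi u)%:R * \sum_v \sum_x beta xi x * (c u v * (beta xi v + (v == x)%:R) *
      (f (add (move xi u v) x) - f (add xi x)))).
  under eq_bigr => x _ do rewrite mulr_sumr.
  rewrite exchange_big; apply: eq_bigr => u _.
  transitivity (\sum_x \sum_v (xi u)%:R * (beta xi x * (c u v * (beta xi v + (v == x)%:R) *
      (f (add (move xi u v) x) - f (add xi x))))).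
    by apply: eq_bigr => x _; rewrite mulrCA !mulr_sumr.
  by rewrite exchange_big mulr_sumr; apply: eq_bigr => v _; rewrite mulr_sumr.
apply: sum_eta_eq => u hu; apply: eq_bigr => v _.
by rewrite IT_uv.
Qed.

End PartC.
Section PartD.
Variables (R : realType) (V : finType) (c : V -> V -> R) (alpha : V -> R).
Hypothesis c_sym : forall x y, c x y = c y x.
Implicit Types (eta xi : conf V) (h : V -> R).

Definition Qd (b : V -> R) h := \sum_x \sum_y b x * b y * c x y * (h y - h x) ^+ 2.

Lemma DI k (f : conf V -> R) :
  SumX k.+1 k.+1 (fun eta => wt alpha eta * f eta * (- Lgen c alpha f eta)) =
  SumX k.+1 k (fun xi => wt alpha xi * (Qd (beta alpha xi) (fun x => f (add xi x)) / 2)).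
Proof.
pose G eta u := - (wt alpha eta * f eta * \sum_v c u v * (alpha v + (eta v)%:R) *
                                  (f (move eta u v) - f eta)).
have E : forall eta, wt alpha eta * f eta * (- Lgen c alpha f eta) =
    \sum_u (eta u)%:R * G eta u.
  move=> eta; rewrite /Lgen /G mulrN mulr_sumr -sumrN; apply: eq_bigr => u _.
  ring.
transitivity (SumX k.+1 k.+1 (fun eta => \sum_u (eta u)%:R * G eta u)).
  by apply: eq_bigr => e _; rewrite E.
rewrite (R1 _ (ltnSn k)) /SumX; apply: eq_bigr => e _.
set xi := toc e.
set hh := fun x => f (add xi x).
have E2 : forall u, (xi u).+1%:R * G (add xi u) u =
    wt alpha xi * (- \sum_v (beta alpha xi u * beta alpha xi v * c u v) * hh u * (hh v - hh u)).
  move=> u; rewrite /G.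
  have E3 : \sum_v c u v * (alpha v + ((add xi u) v)%:R) *
      (f (move (add xi u) u v) - f (add xi u)) =
      \sum_v c u v * beta alpha xi v * (hh v - hh u).
    apply: eq_bigr => v _; rewrite move_add /hh ffunE natrD /beta.
    by case: (eqVneq v u) => [->|_] /=; rewrite ?subrr ?mulr0 ?addr0.
  rewrite E3; have W := wt_add alpha xi u.
  transitivity (- ((wt alpha (add xi u) * (xi u).+1%:R) * hh u *
      \sum_v c u v * beta alpha xi v * (hh v - hh u))); first by rewrite /hh; ring.
  rewrite W mulr_sumr [RHS]mulrN mulr_sumr; congr (- _); apply: eq_bigr => v _; ring.
under eq_bigr => u _ do rewrite E2.
rewrite -mulr_sumr sumrN green; last by move=> x y; rewrite c_sym; ring.
rewrite mulNr opprK /Qd; congr (_ * (_ / _)); apply: eq_bigr => x _; apply: eq_bigr => y _.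
by rewrite expr2; ring.
Qed.

Lemma WI k (f : conf V -> R) :
  k.+1%:R * SumX k.+1 k.+1 (fun eta => wt alpha eta * f eta ^+ 2) =
  SumX k.+1 k (fun xi => wt alpha xi * \sum_x beta alpha xi x * f (add xi x) ^+ 2).
Proof.
transitivity (SumX k.+1 k.+1 (fun eta => \sum_u (eta u)%:R * (wt alpha eta * f eta ^+ 2))).
  rewrite /SumX mulr_sumr; apply: eq_bigr => e he.
  rewrite -mulr_suml -natr_sum; congr (_%:R * _).
  by move/eqP: he.
rewrite (R1 _ (ltnSn k)) /SumX; apply: eq_bigr => e _.
rewrite mulr_sumr; apply: eq_bigr => u _.
transitivity ((wt alpha (add (toc e) u) * ((toc e) u).+1%:R) * f (add (toc e) u) ^+ 2).
  by ring.
by rewrite wt_add; ring.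
Qed.

End PartD.
Section PartE.
Variables (R : realType) (V : finType) (c : V -> V -> R) (alpha : V -> R).
Hypothesis c_sym : forall x y, c x y = c y x.
Hypothesis c_ge0 : forall x y, 0 <= c x y.
Hypothesis alpha_gt0 : forall x, 0 < alpha x.
Implicit Types (eta xi : conf V) (h : V -> R).

Definition Sa h := \sum_x alpha x * h x.
Definition Sa2 h := \sum_x alpha x * h x ^+ 2.

Lemma Qd_ge0 (b : V -> R) h : (forall x, 0 <= b x) -> 0 <= Qd c b h.
Proof.
move=> hb; apply: sumr_ge0 => x _; apply: sumr_ge0 => y _.
apply: mulr_ge0; last exact: sqr_ge0.
by apply: mulr_ge0; [apply: mulr_ge0|]; [apply: hb|apply: hb|apply: c_ge0].
Qed.

Lemma Qd_mono (b1 b2 : V -> R) h : (forall x, 0 <= b1 x) -> (forall x, b1 x <= b2 x) ->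
  Qd c b1 h <= Qd c b2 h.
Proof.
move=> h0 h1; apply: ler_sum => x _; apply: ler_sum => y _.
apply: ler_wpM2r; first exact: sqr_ge0.
apply: ler_wpM2r => //; exact: ler_pM.
Qed.

Lemma Qd_shift (b : V -> R) h (M : R) : Qd c b (fun x => h x - M) = Qd c b h.
Proof.
apply: eq_bigr => x _; apply: eq_bigr => y _.
by congr (_ * _); congr (_ ^+ _); ring.
Qed.

Lemma beta_ge0 xi x : 0 <= beta alpha xi x.
Proof. by rewrite /beta; have := alpha_gt0 x; have := ler0n R (xi x); lra. Qed.

Lemma eig0 lam : lam != 0 -> ~ eigen_negL c alpha 0 lam.
Proof.
move=> hl [f [[eta0 [h0 hf0]] Heq]].
have z : forall x, eta0 x = 0%N.
  move: h0; rewrite /inXi sum_nat_eq0 => /forallP H x.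
  by have /implyP := H x => /(_ isT) /eqP.
have := Heq eta0 h0; rewrite /Lgen big1; last by move=> x _; rewrite z mul0r.
move/eqP; rewrite oppr0 eq_sym mulf_eq0 (negbTE hl) (negbTE hf0).
by [].
Qed.

Lemma Wpos k (f : conf V -> R) eta0 : inXi k.+1 eta0 -> f eta0 != 0 ->
  0 < SumX k.+1 k.+1 (fun eta => wt alpha eta * f eta ^+ 2).
Proof.
move=> h0 hf0.
pose e0 : {ffun V -> 'I_k.+2} := [ffun x => inord (eta0 x)].
have te0 : toc e0 = eta0.
  apply/ffunP => x; rewrite !ffunE inordK //.
  by rewrite ltnS; apply: inXi_le.
rewrite /SumX (bigD1 e0) /=; last by rewrite te0.
have p1 : 0 < wt alpha (toc e0) * f (toc e0) ^+ 2.
  rewrite te0 mulr_gt0 ?wt_gt0 // lt0r sqrf_eq0 hf0 sqr_ge0.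
  by [].
have p2 : 0 <= \sum_(i | inXi k.+1 (toc i) && (i != e0)) wt alpha (toc i) * f (toc i) ^+ 2.
  by apply: sumr_ge0 => i _; rewrite mulr_ge0 ?sqr_ge0 // ltW // wt_gt0.
lra.
Qed.

Lemma DW k lam (f : conf V -> R) :
  (forall eta, inXi k.+1 eta -> - Lgen c alpha f eta = lam * f eta) ->
  lam * SumX k.+1 k.+1 (fun eta => wt alpha eta * f eta ^+ 2) =
  SumX k.+1 k (fun xi => wt alpha xi * (Qd c (beta alpha xi) (fun x => f (add xi x)) / 2)).
Proof.
move=> Heq; rewrite -DI //; rewrite /SumX mulr_sumr; apply: eq_bigr => e he.
by rewrite Heq //; ring.
Qed.

Lemma eig_ge0 k lam : eigen_negL c alpha k.+1 lam -> 0 <= lam.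
Proof.
move=> [f [[eta0 [h0 hf0]] Heq]].
have W := Wpos h0 hf0.
have D := DW Heq.
have D0 : 0 <= SumX k.+1 k (fun xi => wt alpha xi * (Qd c (beta alpha xi) (fun x => f (add xi x)) / 2)).
  apply: sumr_ge0 => e _; apply: mulr_ge0; first by apply: ltW; apply: wt_gt0.
  by apply: divr_ge0 => //; apply: Qd_ge0 => x; apply: beta_ge0.
rewrite -D in D0; nra.
Qed.

End PartE.
Section PartF.
Variables (R : realType) (V : finType) (c : V -> V -> R) (alpha : V -> R).
Hypothesis c_sym : forall x y, c x y = c y x.
Hypothesis c_ge0 : forall x y, 0 <= c x y.
Hypothesis alpha_gt0 : forall x, 0 < alpha x.
Variables (g m : R).
Hypothesis hg0 : 0 <= g.
Hypothesis hm0 : 0 < m.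
Hypothesis hm1 : m <= 1.
Hypothesis hma : forall x, m <= alpha x.
Hypothesis hP : forall h, Sa alpha h = 0 -> g * Sa2 alpha h <= Qd c alpha h / 2.
Implicit Types (eta xi : conf V) (h : V -> R).

Lemma PB k xi h : inXi k xi -> \sum_x beta alpha xi x * h x = 0 ->
  (m * g / k.+1%:R) * \sum_x beta alpha xi x * h x ^+ 2 <= Qd c (beta alpha xi) h / 2.
Proof.
move=> hxi hb.
have Q0 : 0 <= Qd c (beta alpha xi) h / 2.
  by apply: divr_ge0 => //; apply: Qd_ge0 => // x; apply: beta_ge0.
set A := \sum_x alpha x.
have A0 : 0 <= A by apply: sumr_ge0 => x _; apply: ltW.
case: (eqVneq A 0) => [Aeq|Ane].
  have nox : forall x : V, False.
    move=> x; have : alpha x <= A.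
      rewrite /A (bigD1 x) //= lerDl; apply: sumr_ge0 => y _; apply: ltW.
      exact: alpha_gt0.
    by rewrite Aeq; have := alpha_gt0 x; lra.
  by rewrite big1 ?mulr0 // => x; have := nox x.
set M := Sa alpha h / A.
set h' := fun x => h x - M.
have Sh' : Sa alpha h' = 0.
  rewrite /Sa /h'.
  transitivity (Sa alpha h - M * A).
    rewrite /Sa /A mulr_sumr -sumrB; apply: eq_bigr => x _; ring.
  by rewrite /M; field.
set S := \sum_x beta alpha xi x * h x ^+ 2.
set S' := \sum_x beta alpha xi x * h' x ^+ 2.
have s1 : S <= S'.
  have -> : S' = S + M ^+ 2 * \sum_x beta alpha xi x.
    transitivity (\sum_x (beta alpha xi x * h x ^+ 2 - 2%:R * M * (beta alpha xi x * h x)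
                          + M ^+ 2 * beta alpha xi x)).
      by apply: eq_bigr => x _; rewrite /h'; ring.
    by rewrite big_split sumrB /= -mulr_sumr -mulr_sumr hb mulr0 subr0.
  rewrite lerDl mulr_ge0 ?sqr_ge0 //; apply: sumr_ge0 => x _; exact: beta_ge0.
have s2 : m * S' <= k.+1%:R * Sa2 alpha h'.
  rewrite /S' /Sa2 !mulr_sumr; apply: ler_sum => x _.
  have hx : (xi x <= k)%N by apply: inXi_le.
  have hx' : (xi x)%:R <= k%:R :> R by rewrite ler_nat.
  have := sqr_ge0 (h' x); have := hma x; have := alpha_gt0 x.
  have := ler0n R (xi x); rewrite /beta -natr1.
  set t := h' x ^+ 2; set a := alpha x; set n := (xi x)%:R; set K := k%:R.
  move=> n0 a0 ma t0.
  have H1 : m * n * t <= a * K * t.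
    apply: ler_wpM2r => //; apply: ler_pM; [exact: ltW hm0| exact: n0| exact: ma| exact: hx'].
  have H2 : m * a * t <= a * t.
    by apply: ler_wpM2r => //; rewrite ler_piMl //; lra.
  have H3 : 0 <= a * t by rewrite mulr_ge0 //; lra.
  nra.
have s3 : g * Sa2 alpha h' <= Qd c (beta alpha xi) h / 2.
  apply: le_trans (hP Sh') _; rewrite Qd_shift; apply: ler_wpM2r; first by rewrite invr_ge0.
  apply: Qd_mono => // x; first exact: ltW.
  by rewrite /beta lerDl.
have K0 : 0 < k.+1%:R :> R by rewrite ltr0Sn.
have S0 : 0 <= S by apply: sumr_ge0 => x _; rewrite mulr_ge0 ?sqr_ge0 ?beta_ge0.
apply: le_trans s3.
have -> : m * g / k.+1%:R * S = (g / k.+1%:R) * (m * S) by ring.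
have t0 : 0 <= g / k.+1%:R by apply: divr_ge0 => //; apply: ltW.
apply: le_trans (_ : (g / k.+1%:R) * (k.+1%:R * Sa2 alpha h') <= _).
  apply: ler_wpM2l => //; apply: le_trans s2; apply: ler_wpM2l => //; exact: ltW.
have -> : g / k.+1%:R * (k.+1%:R * Sa2 alpha h') = g * Sa2 alpha h'.
  rewrite mulrA mulfVK //; exact: lt0r_neq0.
by [].
Qed.

Lemma LB k lam : lam != 0 -> eigen_negL c alpha k lam -> m * g <= lam.
Proof.
elim: k lam => [|k IH] lam hl.
  by move=> /(eig0 hl).
move=> [f [[eta0 [h0 hf0]] Heq]].
case: (pselect (exists xi, inXi k xi /\ aop alpha f xi != 0)) => [[xi [hxi hne]]|hno].
  apply: (IH lam hl); exists (aop alpha f); split; first by exists xi.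
  move=> xi' hxi'; rewrite -intertwine // -sumrN /aop mulr_sumr; apply: eq_bigr => x _.
  by rewrite -mulrN Heq ?inXi_add //; ring.
have hz : forall xi, inXi k xi -> aop alpha f xi = 0.
  move=> xi hxi; apply/eqP; apply: contraT => hne; case: hno; by exists xi.
have W := Wpos alpha_gt0 h0 hf0.
have D := DW c_sym Heq.
have WW := WI alpha k f.
set W1 := SumX k.+1 k.+1 (fun eta => wt alpha eta * f eta ^+ 2) in W D WW.
have K0 : 0 < k.+1%:R :> R by rewrite ltr0Sn.
have : (m * g / k.+1%:R) * (k.+1%:R * W1) <= lam * W1.
  rewrite D WW /SumX mulr_sumr. apply: ler_sum => e he.
  rewrite mulrCA; apply: ler_wpM2l; first by apply: ltW; apply: wt_gt0.
  exact: PB he (hz _ he).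
have -> : m * g / k.+1%:R * (k.+1%:R * W1) = (m * g) * W1.
  rewrite mulrA mulfVK //; exact: lt0r_neq0.
move=> H; nra.
Qed.

End PartF.
Local Open Scope classical_set_scope.
Lemma rv_min (R : realType) n (F G1 G2 : 'rV[R]_n -> R) (B : R) :
  continuous F -> continuous G1 -> continuous G2 ->
  (forall v, G1 v = 0 -> G2 v = 1 -> forall i, `|v ord0 i| <= B) ->
  (exists v, G1 v = 0 /\ G2 v = 1) ->
  exists v, [/\ G1 v = 0, G2 v = 1 & forall w, G1 w = 0 -> G2 w = 1 -> F v <= F w].
Proof.
move=> cF cG1 cG2 hB [v0 [h01 h02]].
set A := [set v | G1 v = 0 /\ G2 v = 1].
have clA : closed A.
  have -> : A = (G1 @^-1` [set 0]) `&` (G2 @^-1` [set 1]) by [].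
  apply: closedI; apply: preimage_closed; [by move=> ? _; exact: cG1| exact: closed_eq|
     by move=> ? _; exact: cG2| exact: closed_eq].
have bA : bounded_set A.
  exists `|B|; split; first by rewrite realE normr_ge0.
  move=> M hM v [hv1 hv2].
  have hM' : `|B| <= M by apply: ltW.
  rewrite /= [leLHS]/Num.norm /= mx_normrE; apply: bigmax_le => [|[i j] _ /=].
    exact: le_trans (normr_ge0 _) hM'.
  rewrite (ord1 i); apply: le_trans (hB v hv1 hv2 j) _.
  exact: le_trans (ler_norm _) hM'.
have cA := bounded_closed_compact bA clA.
have [v vA vmin] := @EVT_min_rV R n F A (ex_intro _ v0 (conj h01 h02)) cA
   (fun x => (@continuous_subspaceT _ _ _ _ cF) x).
exists v; rewrite inE in vA; case: vA => ? ?; split => // w ? ?.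
by apply: vmin; rewrite inE.
Qed.
Local Close Scope classical_set_scope.
Section PartG.
Variables (R : realType) (V : finType) (c : V -> V -> R) (alpha : V -> R).
Hypothesis c_sym : forall x y, c x y = c y x.
Hypothesis c_ge0 : forall x y, 0 <= c x y.
Hypothesis alpha_gt0 : forall x, 0 < alpha x.
Implicit Types (h : V -> R).

Local Notation n := #|V|.
Definition hv (v : 'rV[R]_n) : V -> R := fun x => v ord0 (enum_rank x).
Definition rv h : 'rV[R]_n := \row_i h (enum_val i).
Lemma hv_rv h : hv (rv h) = h.
Proof. by apply: boolp.funext => x; rewrite /hv /rv mxE enum_rankK. Qed.

Lemma cont_sum (I : Type) (s : seq I) (F : I -> 'rV[R]_n -> R) :
  (forall i, continuous (F i)) -> continuous (fun v => \sum_(i <- s) F i v).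
Proof.
move=> H; elim: s => [|a s IH].
  have -> : (fun v : 'rV[R]_n => \sum_(i <- [::]) F i v) = (fun _ => 0).
    by apply: boolp.funext => v; rewrite big_nil.
  exact: cst_continuous.
have -> : (fun v => \sum_(i <- a :: s) F i v) = (fun v => F a v + \sum_(i <- s) F i v).
  by apply: boolp.funext => v; rewrite big_cons.
by move=> x; exact: (continuousD (H a x) (IH x)).
Qed.

Lemma cont_mul (f1 f2 : 'rV[R]_n -> R) : continuous f1 -> continuous f2 ->
  continuous (fun v => f1 v * f2 v).
Proof. by move=> h1 h2 x; apply: continuousM; [exact: h1|exact: h2]. Qed.

Lemma cont_sub (f1 f2 : 'rV[R]_n -> R) : continuous f1 -> continuous f2 ->
  continuous (fun v => f1 v - f2 v).
Proof. by move=> h1 h2 x; exact: (continuousD (h1 x) (continuousN (h2 x))). Qed.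

Lemma cont_coord x : continuous (fun v : 'rV[R]_n => hv v x).
Proof. exact: coord_continuous. Qed.

Definition Sa' v := Sa alpha (hv v).
Definition Sa2' v := Sa2 alpha (hv v).
Definition Qd' v := Qd c alpha (hv v).

Lemma cont_Sa : continuous Sa'.
Proof.
apply: cont_sum => x; apply: cont_mul; [exact: cst_continuous| exact: cont_coord].
Qed.

Lemma cont_Sa2 : continuous Sa2'.
Proof.
apply: cont_sum => x; apply: cont_mul; first exact: cst_continuous.
have -> : (fun v => hv v x ^+ 2) = (fun v => hv v x * hv v x).
  by apply: boolp.funext => v; rewrite expr2.
by apply: cont_mul; exact: cont_coord.
Qed.

Lemma cont_Qd : continuous Qd'.
Proof.
apply: cont_sum => x; apply: cont_sum => y; apply: cont_mul.
  by apply: cont_mul; [apply: cont_mul|]; exact: cst_continuous.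
have -> : (fun v => (hv v y - hv v x) ^+ 2) =
   (fun v => (hv v y - hv v x) * (hv v y - hv v x)).
  by apply: boolp.funext => v; rewrite expr2.
by apply: cont_mul; apply: cont_sub; exact: cont_coord.
Qed.

Lemma exists_min : (exists h, Sa alpha h = 0 /\ Sa2 alpha h = 1) ->
  exists hs, [/\ Sa alpha hs = 0, Sa2 alpha hs = 1 &
    forall h, Sa alpha h = 0 -> Sa2 alpha h = 1 -> Qd c alpha hs <= Qd c alpha h].
Proof.
move=> [h0 [h01 h02]].
pose B := 1 + \sum_x (alpha x)^-1.
have bnd : forall v, Sa' v = 0 -> Sa2' v = 1 -> forall i, `|v ord0 i| <= B.
  move=> v _ hv2 i.
  have -> : v ord0 i = hv v (enum_val i) by rewrite /hv enum_valK.
  set x := enum_val i; set t := hv v x.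
  have a0 := alpha_gt0 x.
  have t1 : alpha x * t ^+ 2 <= 1.
    rewrite -hv2 /Sa2' /Sa2 (bigD1 x) //= lerDl; apply: sumr_ge0 => y _.
    by rewrite mulr_ge0 ?sqr_ge0 // ltW.
  have t2 : t ^+ 2 <= (alpha x)^-1.
    by rewrite -(ler_pM2l a0) mulrV ?unitf_gt0.
  have t3 : (alpha x)^-1 <= \sum_x (alpha x)^-1.
    rewrite (bigD1 x) //= lerDl; apply: sumr_ge0 => y _.
    by rewrite invr_ge0 ltW.
  have t4 : `|t| <= 1 + t ^+ 2.
    rewrite -real_normK ?num_real //; have := normr_ge0 t; set s := `|t|; nra.
  rewrite /B; lra.
have ex0 : exists v, Sa' v = 0 /\ Sa2' v = 1.
  by exists (rv h0); rewrite /Sa' /Sa2' hv_rv.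
have [v [v1 v2 vmin]] := rv_min cont_Qd cont_Sa cont_Sa2 bnd ex0.
exists (hv v); split => // h hh1 hh2.
by have := vmin (rv h); rewrite /Sa' /Sa2' /Qd' hv_rv; apply.
Qed.

End PartG.
Section PartH.
Variables (R : realType) (V : finType) (c : V -> V -> R) (alpha : V -> R).
Hypothesis c_sym : forall x y, c x y = c y x.
Hypothesis c_ge0 : forall x y, 0 <= c x y.
Hypothesis c_conn : forall x y, connect (fun u v => 0 < c u v) x y.
Hypothesis alpha_gt0 : forall x, 0 < alpha x.
Implicit Types (h : V -> R).

Lemma Sa_scale s h : Sa alpha (fun x => s * h x) = s * Sa alpha h.
Proof. by rewrite /Sa mulr_sumr; apply: eq_bigr => x _; ring. Qed.
Lemma Sa2_scale s h : Sa2 alpha (fun x => s * h x) = s ^+ 2 * Sa2 alpha h.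
Proof. by rewrite /Sa2 mulr_sumr; apply: eq_bigr => x _; ring. Qed.
Lemma Qd_scale s h : Qd c alpha (fun x => s * h x) = s ^+ 2 * Qd c alpha h.
Proof.
rewrite /Qd mulr_sumr; apply: eq_bigr => x _; rewrite mulr_sumr; apply: eq_bigr => y _; ring.
Qed.
Lemma Sa2_ge0 h : 0 <= Sa2 alpha h.
Proof. by apply: sumr_ge0 => x _; rewrite mulr_ge0 ?sqr_ge0 // ltW. Qed.
Lemma QdA_ge0 h : 0 <= Qd c alpha h.
Proof. by apply: Qd_ge0 => // x; apply: ltW. Qed.

Lemma normalize h : Sa alpha h = 0 -> 0 < Sa2 alpha h ->
  exists s, [/\ Sa alpha (fun x => s * h x) = 0, Sa2 alpha (fun x => s * h x) = 1 &
               Qd c alpha (fun x => s * h x) = Qd c alpha h / Sa2 alpha h].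
Proof.
move=> h1 hp; exists (Num.sqrt (Sa2 alpha h))^-1.
have s2 : (Num.sqrt (Sa2 alpha h))^-1 ^+ 2 = (Sa2 alpha h)^-1.
  by rewrite exprVn sqr_sqrtr // ltW.
rewrite Sa_scale h1 mulr0 Sa2_scale Qd_scale s2 mulVf ?gt_eqF //.
by split => //; rewrite mulrC.
Qed.

Lemma homog hs : (forall h, Sa alpha h = 0 -> Sa2 alpha h = 1 -> Qd c alpha hs <= Qd c alpha h) ->
  forall h, Sa alpha h = 0 -> Qd c alpha hs * Sa2 alpha h <= Qd c alpha h.
Proof.
move=> hmin h h1.
have := Sa2_ge0 h; rewrite le_eqVlt => /orP [/eqP <-|hp].
  by rewrite mulr0; apply: QdA_ge0.
have [s [s1 s2 s3]] := normalize h1 hp.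
have := hmin _ s1 s2; rewrite s3 => H.
by rewrite -ler_pdivlMr.
Qed.

Lemma quad0 (a b : R) : (forall t, 0 <= t * b + t ^+ 2 * a) -> b = 0.
Proof.
move=> H; set D := `|a| + 1.
have D0 : 0 < D by rewrite /D; have := normr_ge0 a; lra.
pose t := - b / (2%:R * D).
have E : (2%:R * D) ^+ 2 * (t * b + t ^+ 2 * a) = b ^+ 2 * (a - 2%:R * D).
  rewrite /t; field; rewrite gt_eqF //; lra.
have H1 : 0 <= b ^+ 2 * (a - 2%:R * D).
  by rewrite -E; apply: mulr_ge0; [exact: sqr_ge0| exact: H].
have H2 : a - 2%:R * D < 0.
  rewrite /D; have := ler_norm a; have := normr_ge0 a; lra.
have : b ^+ 2 <= 0.
  by nra.
by have := sqr_ge0 b => h1 h2; apply/eqP; rewrite -sqrf_eq0 eq_le h2 h1.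
Qed.

Definition Pp h u := \sum_x alpha x * h x * u x.
Definition Bl h u := \sum_x \sum_y alpha x * alpha y * c x y * (u y - u x) * (h y - h x).

Lemma Sa2_expand h u t : Sa2 alpha (fun x => h x + t * u x) =
  Sa2 alpha h + (2%:R * t) * Pp h u + t ^+ 2 * Sa2 alpha u.
Proof.
rewrite /Sa2 /Pp.
transitivity (\sum_x (alpha x * h x ^+ 2 + (2%:R * t) * (alpha x * h x * u x)
   + t ^+ 2 * (alpha x * u x ^+ 2))).
  by apply: eq_bigr => x _; ring.
by rewrite !big_split /= -!mulr_sumr.
Qed.

Lemma Qd_expand h u t : Qd c alpha (fun x => h x + t * u x) =
  Qd c alpha h + (2%:R * t) * Bl h u + t ^+ 2 * Qd c alpha u.
Proof.
rewrite /Qd /Bl.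
transitivity (\sum_x \sum_y (alpha x * alpha y * c x y * (h y - h x) ^+ 2
   + (2%:R * t) * (alpha x * alpha y * c x y * (u y - u x) * (h y - h x))
   + t ^+ 2 * (alpha x * alpha y * c x y * (u y - u x) ^+ 2))).
  by apply: eq_bigr => x _; apply: eq_bigr => y _; ring.
under eq_bigr => x _ do rewrite !big_split /= -!mulr_sumr.
by rewrite !big_split /= -!mulr_sumr.
Qed.

Lemma min_eigen hs : Sa alpha hs = 0 -> Sa2 alpha hs = 1 ->
  (forall h, Sa alpha h = 0 -> Sa2 alpha h = 1 -> Qd c alpha hs <= Qd c alpha h) ->
  forall x, - Aop c alpha hs x = (Qd c alpha hs / 2) * hs x.
Proof.
move=> hs1 hs2 hmin.
have HB := homog hmin.
set q := Qd c alpha hs.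
have stepA : forall u, Sa alpha u = 0 -> Bl hs u = q * Pp hs u.
  move=> u u1.
  have : 2%:R * (Bl hs u - q * Pp hs u) = 0.
    apply: (@quad0 (Qd c alpha u - q * Sa2 alpha u)) => t.
    have w1 : Sa alpha (fun x => hs x + t * u x) = 0.
      have -> : Sa alpha (fun x => hs x + t * u x) = Sa alpha hs + t * Sa alpha u.
        by rewrite /Sa mulr_sumr -big_split; apply: eq_bigr => x _ /=; ring.
      by rewrite hs1 u1 mulr0 add0r.
    have := HB _ w1; rewrite Sa2_expand Qd_expand hs2 -/q => H.
    have -> : t * (2%:R * (Bl hs u - q * Pp hs u)) + t ^+ 2 * (Qd c alpha u - q * Sa2 alpha u)
        = (q + 2%:R * t * Bl hs u + t ^+ 2 * Qd c alpha u)
          - q * (1 + 2%:R * t * Pp hs u + t ^+ 2 * Sa2 alpha u) by ring.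
    by rewrite subr_ge0.
  by move/eqP; rewrite mulf_eq0 pnatr_eq0 /= subr_eq0 => /eqP.
have [x0 _] : exists x0 : V, true.
  case: (pickP (fun _ : V => true)) => [x0 _|H]; first by exists x0.
  by move: hs2; rewrite /Sa2 big_pred0 // => /eqP; rewrite eq_sym oner_eq0.
set A := \sum_x alpha x.
have A0 : 0 < A.
  rewrite /A (bigD1 x0) //=; have := alpha_gt0 x0.
  have : 0 <= \sum_(i | i != x0) alpha i by apply: sumr_ge0 => i _; apply: ltW.
  lra.
have stepB : forall u, Bl hs u = q * Pp hs u.
  move=> u; set M := Sa alpha u / A.
  have u1 : Sa alpha (fun x => u x - M) = 0.
    rewrite /Sa; under eq_bigr => x _ do rewrite mulrBr.
    rewrite sumrB -mulr_suml -/A /M -/(Sa alpha u); field; exact: lt0r_neq0.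
  have := stepA _ u1.
  have -> : Bl hs (fun x => u x - M) = Bl hs u.
    by apply: eq_bigr => x _; apply: eq_bigr => y _; congr (_ * _); congr (_ * _); ring.
  have -> : Pp hs (fun x => u x - M) = Pp hs u.
    rewrite /Pp; under eq_bigr => x _ do rewrite mulrBr.
    rewrite sumrB; have -> : \sum_x alpha x * hs x * M = M * Sa alpha hs.
      by rewrite /Sa mulr_sumr; apply: eq_bigr => x _; ring.
    by rewrite hs1 mulr0 subr0.
  by [].
move=> z; have := stepB (fun x => (x == z)%:R).
have -> : Pp hs (fun x => (x == z)%:R) = alpha z * hs z.
  rewrite /Pp; under eq_bigr => x _ do rewrite mulrC.
  by rewrite sum_delta.
have -> : Bl hs (fun x => (x == z)%:R) = - 2%:R * (alpha z * Aop c alpha hs z).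
  have Ks : forall x y, alpha x * alpha y * c x y = alpha y * alpha x * c y x.
    by move=> x y; rewrite c_sym; ring.
  have G' := @green R V (fun x y => alpha x * alpha y * c x y) (fun x => (x == z)%:R) hs Ks.
  rewrite /Bl; move: G'.
  have -> : \sum_x \sum_y alpha x * alpha y * c x y * (x == z)%:R * (hs y - hs x)
      = alpha z * Aop c alpha hs z.
    transitivity (\sum_x (x == z)%:R * \sum_y alpha x * alpha y * c x y * (hs y - hs x)).
      by apply: eq_bigr => x _; rewrite mulr_sumr; apply: eq_bigr => y _; ring.
    rewrite sum_delta /Aop mulr_sumr; apply: eq_bigr => y _; ring.
  by move=> ->; field.
move=> H; have a0 := alpha_gt0 z.
have an : alpha z != 0 := lt0r_neq0 a0.
have -> : - Aop c alpha hs z = (- 2%:R * (alpha z * Aop c alpha hs z)) / (2%:R * alpha z).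
  by field.
by rewrite H; field.
Qed.

End PartH.
Section PartI.
Variables (R : realType) (V : finType) (c : V -> V -> R) (alpha : V -> R).
Hypothesis c_sym : forall x y, c x y = c y x.
Hypothesis c_ge0 : forall x y, 0 <= c x y.
Hypothesis c_conn : forall x y, connect (fun u v => 0 < c u v) x y.
Hypothesis alpha_gt0 : forall x, 0 < alpha x.
Implicit Types (h : V -> R).

Lemma q_pos hs : Sa alpha hs = 0 -> Sa2 alpha hs = 1 -> 0 < Qd c alpha hs.
Proof.
move=> hs1 hs2.
have [x0 _] : exists x0 : V, true.
  case: (pickP (fun _ : V => true)) => [x0 _|H]; first by exists x0.
  by move: hs2; rewrite /Sa2 big_pred0 // => /eqP; rewrite eq_sym oner_eq0.
rewrite lt0r QdA_ge0 // andbT; apply/negP => /eqP Q0.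
have T0 : forall x y, alpha x * alpha y * c x y * (hs y - hs x) ^+ 2 = 0.
  move=> x y.
  have nn : forall i j, 0 <= alpha i * alpha j * c i j * (hs j - hs i) ^+ 2.
    by move=> i j; rewrite mulr_ge0 ?sqr_ge0 // mulr_ge0 // mulr_ge0 // ltW.
  have H1 : forall i, true -> 0 <= \sum_j alpha i * alpha j * c i j * (hs j - hs i) ^+ 2.
    by move=> i _; apply: sumr_ge0 => j _; exact: nn.
  have Hx := @psumr_eq0P _ _ _ _ H1 Q0 x isT.
  exact: (@psumr_eq0P _ _ _ _ (fun j _ => nn x j) Hx y isT).
have edge : forall x y, 0 < c x y -> hs y = hs x.
  move=> x y cxy; have := T0 x y; move/eqP; rewrite !mulf_eq0 !(gt_eqF (alpha_gt0 _)) gt_eqF //=.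
  by rewrite orbb subr_eq0 => /eqP.
have cst : forall y, hs y = hs x0.
  move=> y; have /connectP [p pth ->] := c_conn x0 y.
  elim: p x0 pth => //= z p IH x /andP [hxz pth].
  by rewrite IH // (edge _ _ hxz).
have : Sa alpha hs = hs x0 * \sum_x alpha x.
  by rewrite /Sa mulr_sumr; apply: eq_bigr => x _; rewrite cst mulrC.
rewrite hs1 => /esym /eqP; rewrite mulf_eq0 => /orP [/eqP h0|].
  move: hs2; rewrite /Sa2 big1; first by move/eqP; rewrite eq_sym oner_eq0.
  by move=> x _; rewrite cst h0 expr0n mulr0.
rewrite (bigD1 x0) //= paddr_eq0 ?(gt_eqF (alpha_gt0 _)) //.
  by apply: ltW.
by apply: sumr_ge0 => i _; apply: ltW.
Qed.

Lemma min_gap : (exists h, Sa alpha h = 0 /\ 0 < Sa2 alpha h) ->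
  exists gs, [/\ 0 < gs, eigen_negL c alpha 1 gs &
     forall h, Sa alpha h = 0 -> gs * Sa2 alpha h <= Qd c alpha h / 2].
Proof.
move=> [h0 [h01 h02]].
have [s [s1 s2 _]] := normalize c h01 h02.
have [hs [hs1 hs2 hmin]] := exists_min c alpha_gt0 (ex_intro _ _ (conj s1 s2)).
have qp := q_pos hs1 hs2.
exists (Qd c alpha hs / 2); split.
- by apply: divr_gt0.
- apply: (lift_eigen c_sym (isT : (0 < 1)%N) (min_eigen c_sym c_ge0 alpha_gt0 hs1 hs2 hmin)).
  apply/existsP; apply: contraT; rewrite negb_exists => /forallP H.
  move: hs2; rewrite /Sa2 big1; first by move/eqP; rewrite eq_sym oner_eq0.
  by move=> x _; have := H x; rewrite negbK => /eqP ->; rewrite expr0n mulr0.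
- move=> h h1; have := homog c_ge0 alpha_gt0 hmin h1.
  move=> H; rewrite mulrAC; apply: ler_wpM2r => //; by rewrite invr_ge0.
Qed.

End PartI.
Section PartJ.
Variables (R : realType) (V : finType) (c : V -> V -> R) (alpha : V -> R).
Implicit Types (h : V -> R).

Definition zc : conf V := [ffun _ => 0%N].

Lemma xi1 (eta : conf V) : inXi 1 eta -> exists x, eta = add zc x.
Proof.
move=> he; case: (pickP (fun x => 0 < eta x)%N) => [x hx | H]; last first.
  move: he; rewrite /inXi big1 // => x _; have := H x.
  by move/negbT; rewrite -eqn0Ngt => /eqP.
exists x; move: he; rewrite /inXi (bigD1 x) //= => /eqP hs.
have rest0 : (\sum_(i | i != x) eta i = 0)%N by lia.
have ex1 : eta x = 1%N by lia.
move/eqP: rest0; rewrite sum_nat_eq0 => /forallP R0.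
apply/ffunP => z; rewrite !ffunE; case: (eqVneq z x) => [->|zx]; first by rewrite ex1.
by have := R0 z; rewrite zx /= => /eqP ->.
Qed.

Lemma inXi_zc : inXi 0 zc.
Proof. by rewrite /inXi big1 // => x _; rewrite ffunE. Qed.

Lemma eig1_RW lam : eigen_negL c alpha 1 lam ->
  exists h, (forall x, - Aop c alpha h x = lam * h x) /\ exists x, h x != 0.
Proof.
move=> [f [[eta0 [h0 hf0]] Heq]].
exists (fun x => f (add zc x)); split; last first.
  by have [x0 E] := xi1 h0; exists x0; rewrite -E.
move=> x; have := Heq (add zc x); rewrite inXi_add inXi_zc => /(_ isT).
rewrite Lgen_add_split big1 ?add0r; last by move=> u _; rewrite ffunE mul0r.
move=> <-; congr (- _); apply: eq_bigr => v _; rewrite /beta ffunE addr0.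
by case: (eqVneq v x) => [->|_]; rewrite ?subrr ?mulr0 // addr0.
Qed.

End PartJ.

Local Open Scope classical_set_scope.

Lemma theorem1p1_aux (R : realType) (V : finType) (c : V -> V -> R) (alpha : V -> R)
  (c_sym : forall x y, c x y = c y x)
  (c_ge0 : forall x y, 0 <= c x y)
  (c_conn : forall x y, connect (fun u v => 0 < c u v) x y)
  (alpha_gt0 : forall x, 0 < alpha x) :
  Num.min 1 (alpha_min alpha) * gapRW c alpha <= gapSIP c alpha /\
  gapSIP c alpha <= gapRW c alpha.
Proof.
pose S k := [set lam : R | lam != 0 /\ eigen_negL c alpha k lam].
have gapE : forall k, gap c alpha k = inf (S k) by [].
have Slb : forall k, (0 < k)%N -> lbound (S k) 0.
  move=> [|k] k0; first by rewrite ltnn in k0.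
  move=> l [_ H]; exact: (@eig_ge0 R V c alpha c_sym c_ge0 alpha_gt0 k l H).
have emp : forall k, ~ (S k !=set0) -> S k = set0.
  move=> k ne; apply/seteqP; split => l hl //; case: ne; by exists l.
have gap_ge0 : forall k, (0 < k)%N -> 0 <= gap c alpha k.
  move=> k k0; rewrite gapE; case: (pselect (S k !=set0)) => [ne|ne].
    exact: lb_le_inf ne (Slb k k0).
  by rewrite emp // inf0.
have S1sub : forall k, (0 < k)%N -> forall l, S 1%N l -> S k l.
  move=> k k0 l [hl H]; split => //; have [h [Hh [x hx]]] := eig1_RW H.
  exact: (@lift_eigen R V c alpha c_sym k l h k0 Hh (ex_intro _ x hx)).
have g0 : 0 <= gapRW c alpha := gap_ge0 1%N isT.
set SIP := [set gap c alpha k | k in [set k : nat | (2 <= k)%N]].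
have gapSIPE : gapSIP c alpha = inf SIP by [].
have SIPlb : lbound SIP 0.
  by move=> _ [k hk <-]; apply: gap_ge0; apply: leq_trans hk.
have SIPne : SIP !=set0 by exists (gap c alpha 2); exists 2%N.
have SIP_le2 : gapSIP c alpha <= gap c alpha 2.
  by rewrite gapSIPE; apply: (ge_inf (ex_intro _ 0 SIPlb)); exists 2%N.
case: (pselect (S 1%N !=set0)) => [[l1 hl1]|ne1].
  have [h1 [_ [x0 _]]] := eig1_RW hl1.2.
  have [xm _ hxm] := @arg_minP _ R V x0 xpredT alpha isT.
  set am := alpha_min alpha.
  have rlb : lbound (range alpha) (alpha xm) by move=> _ [x _ <-]; apply: hxm.
  have am_ge : alpha xm <= am.
    by apply: lb_le_inf rlb; exists (alpha x0); exists x0.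
  have am_le : forall x, am <= alpha x.
    by move=> x; apply: (ge_inf (ex_intro _ _ rlb)); exists x.
  set m := Num.min 1 am.
  have m0 : 0 < m.
    rewrite lt_min ltr01 /=; exact: lt_le_trans (alpha_gt0 xm) am_ge.
  have m1 : m <= 1 by rewrite ge_min lexx.
  have ma : forall x, m <= alpha x by move=> x; rewrite ge_min (am_le x) orbT.
  have hP : forall h, Sa alpha h = 0 -> gapRW c alpha * Sa2 alpha h <= Qd c alpha h / 2.
    move=> h hh1; have := Sa2_ge0 alpha_gt0 h; rewrite le_eqVlt => /orP [/eqP <-|hp].
      by rewrite mulr0; apply: divr_ge0 => //; exact: QdA_ge0.
    have [gs [gs0 gse gsP]] := min_gap c_sym c_ge0 c_conn alpha_gt0 (ex_intro _ h (conj hh1 hp)).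
    have ggs : gapRW c alpha <= gs.
      apply: (ge_inf (ex_intro _ 0 (Slb 1%N isT))); split => //; exact: lt0r_neq0.
    apply: le_trans (gsP h hh1); apply: ler_wpM2r => //; exact: Sa2_ge0.
  split.
    rewrite gapSIPE; apply: lb_le_inf SIPne _ => _ [k hk <-].
    have k0 : (0 < k)%N by apply: leq_trans hk.
    rewrite gapE; apply: lb_le_inf; first by exists l1; exact: S1sub.
    move=> l [hl H]; exact: (@LB R V c alpha c_sym c_ge0 alpha_gt0 (gapRW c alpha) m g0 m0 m1 ma hP k l hl H).
  apply: le_trans SIP_le2 _; rewrite /gapRW gapE; apply: lb_le_inf; first by exists l1.
  move=> l hl; apply: (ge_inf (ex_intro _ 0 (Slb 2%N isT))); exact: S1sub.
have g00 : gapRW c alpha = 0 by rewrite /gapRW gapE emp // inf0.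
rewrite g00 mulr0; split; first by rewrite gapSIPE; apply: lb_le_inf SIPne SIPlb.
apply: le_trans SIP_le2 _.
suff E2 : S 2%N = set0 by rewrite gapE E2 inf0.
apply/seteqP; split => // l [hl H]; exfalso.
have all_eq : forall x y : V, x = y.
  move=> x y; apply/eqP; apply: contraT => xy; case: ne1.
  pose h := fun z => (z == x)%:R / alpha x - (z == y)%:R / alpha y.
  have dl : forall w, \sum_z alpha z * ((z == w)%:R / alpha w) = 1.
    move=> w; transitivity (\sum_z (z == w)%:R * (alpha z / alpha w)).
      by apply: eq_bigr => z _; rewrite mulrCA mulrA.
    by rewrite sum_delta divff // lt0r_neq0.
  have h1 : Sa alpha h = 0.
    rewrite /Sa /h; under eq_bigr => z _ do rewrite mulrBr.
    by rewrite sumrB !dl subrr.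
  have hp : 0 < Sa2 alpha h.
    rewrite /Sa2 (bigD1 x) //=.
    have p1 : 0 < alpha x * h x ^+ 2.
      rewrite /h eqxx (negbTE xy) mul0r subr0 mul1r mulr_gt0 //.
      by rewrite exprn_gt0 // invr_gt0.
    have p2 : 0 <= \sum_(i | i != x) alpha i * h i ^+ 2.
      by apply: sumr_ge0 => i _; rewrite mulr_ge0 ?sqr_ge0 // ltW.
    lra.
  have [gs [gs0 gse _]] := min_gap c_sym c_ge0 c_conn alpha_gt0 (ex_intro _ h (conj h1 hp)).
  by exists gs; split => //; exact: lt0r_neq0.
case: H => f [[eta0 [h0 hf0]] Heq].
move: (Heq eta0 h0); rewrite /Lgen big1; last first.
  move=> x _; case: (posnP (eta0 x)) => [->|hx]; first by rewrite mul0r.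
  by rewrite big1 ?mulr0 // => y _; rewrite -(all_eq x y) move_same // subrr mulr0.
move/eqP; rewrite oppr0 eq_sym mulf_eq0 (negbTE hl) (negbTE hf0).
by [].
Qed.

Local Close Scope classical_set_scope.

Theorem theorem1p1 (R : realType) (V : finType) (c : V -> V -> R) (alpha : V -> R)
  (c_sym : forall x y, c x y = c y x)
  (c_ge0 : forall x y, 0 <= c x y)
  (c_conn : forall x y, connect (fun u v => 0 < c u v) x y)
  (alpha_gt0 : forall x, 0 < alpha x) :
  Num.min 1 (alpha_min alpha) * gapRW c alpha <= gapSIP c alpha /\
  gapSIP c alpha <= gapRW c alpha.
Proof. exact: theorem1p1_aux c_sym c_ge0 c_conn alpha_gt0. Qed.
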